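(* A class of finite pointed $(\emptyset,[1])$-models is definable by a countable disjunction of $(\emptyset,[1])$-formulae of graded multimodal logic if and only if it is recognizable by the Weisfeiler–Leman algorithm.
   Context: $(\emptyset,[1])$-formulae of graded multimodal logic are generated by $\varphi ::= \top \mid \neg\varphi \mid (\varphi\land\varphi) \mid \langle 1\rangle_{\geq k}\varphi$ with $k\in\mathbb N$. A finite $(\emptyset,[1])$-model is $M=(W,R_1)$ with $W$ a nonempty finite set and $R_1\subseteq W\times W$; a pointed model is $(M,w)$ with $w\in W$; $(M,w)\models\langle1\rangle_{\geq k}\psi$ iff $|\{v:(w,v)\in R_1,\ (M,v)\models\psi\}|\geq k$, Boolean cases standard. A class $\mathcal K$ of finite pointed models is definable by a countable disjunction if there is a countable set $S$ of formulae with $(M,w)\in\mathcal K$ iff $(M,w)\models\varphi$ for some $\varphi\in S$, for every finite pointed model. Weisfeiler–Leman colors (canonical, injective color refinement): $c^M_0(w)=\ast$ (a fixed constant) for all $w$, and $c^M_{t+1}(w)=\big(c^M_t(w),\{\{c^M_t(v):(w,v)\in R_1\}\}\big)$, where $\{\{\cdot\}\}$ denotes the multiset. A class $\mathcal K$ of finite pointed $(\emptyset,[1])$-models is recognizable by the Weisfeiler–Leman algorithm if there is a set $F$ of colors such that, for every finite pointed model $(M,w)$, $(M,w)\in\mathcal K$ iff $c^M_t(w)\in F$ for some $t\in\mathbb N$. *)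

(* Defs.v *)
From HB Require Import structures.
From mathcomp Require Import all_boot.
Set Implicit Arguments. Unset Strict Implicit. Unset Printing Implicit Defensive.

Inductive form : Type :=
| FTop : form
| FNeg : form -> form
| FAnd : form -> form -> form
| FDia : nat -> form -> form.

(** Finite (emptyset,[1])-models: a finite type W (nonempty, as witnessed by
    the point w) with a binary relation R1 : rel W.  A pointed model is
    (W, R1, w). *)
Fixpoint sat (W : finType) (R1 : rel W) (phi : form) (w : W) : bool :=
  match phi with
  | FTop => true
  | FNeg p => ~~ sat R1 p w
  | FAnd p q => sat R1 p w && sat R1 q w
  | FDia k p => k <= #|[pred v | R1 w v && sat R1 p v]|
  end.

Definition pclass := forall W : finType, rel W -> W -> Prop.

(** Definable by a countable disjunction: a set S of formulae (any set of
    formulae is countable, since [form] is countable). *)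
Definition definable_by_countable_disjunction (K : pclass) : Prop :=
  exists S : form -> Prop,
    forall (W : finType) (R1 : rel W) (w : W),
      K W R1 w <-> exists phi, S phi /\ sat R1 phi w.

(** A colour is either the constant [Star] or a pair (old colour, multiset of
    colours); multisets are represented canonically as lists sorted by an
    injective encoding into nat, so equality of colours is equality of the
    pair (colour, multiset). *)
Inductive color : Type :=
| Star : color
| Refine : color -> seq color -> color.

Fixpoint color_enc (c : color) : GenTree.tree unit :=
  match c with
  | Star => GenTree.Leaf tt
  | Refine c ms => GenTree.Node 0 (color_enc c :: map color_enc ms)
  end.

Fixpoint color_dec (t : GenTree.tree unit) : color :=
  match t with
  | GenTree.Leaf _ => Star
  | GenTree.Node _ [::] => Star
  | GenTree.Node _ (t :: ts) => Refine (color_dec t) (map color_dec ts)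
  end.

Fixpoint color_encK (c : color) : color_dec (color_enc c) = c :=
  match c return color_dec (color_enc c) = c with
  | Star => erefl
  | Refine c ms =>
      f_equal2 Refine (color_encK c)
        ((fix F (l : seq color) : map color_dec (map color_enc l) = l :=
            match l return map color_dec (map color_enc l) = l with
            | [::] => erefl
            | x :: l' => f_equal2 cons (color_encK x) (F l')
            end) ms)
  end.

HB.instance Definition _ := Countable.copy color (can_type color_encK).

Definition mset_of (s : seq color) : seq color :=
  sort (fun a b => pickle a <= pickle b) s.

Fixpoint wl_color (W : finType) (R1 : rel W) (t : nat) (w : W) : color :=
  match t with
  | 0 => Star
  | t'.+1 => Refine (wl_color R1 t' w)
                    (mset_of [seq wl_color R1 t' v | v <- enum W & R1 w v])
  end.

Definition WL_recognizable (K : pclass) : Prop :=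
  exists F : color -> Prop,
    forall (W : finType) (R1 : rel W) (w : W),
      K W R1 w <-> exists t : nat, F (wl_color R1 t w).

(* Main.v *)
Require Import Defs.
From mathcomp Require Import all_boot.

Lemma card_succ (W : finType) (R : rel W) w (P : pred W) :
  #|[pred v | R w v && P v]| = count P [seq v <- enum W | R w v].
Proof.
rewrite count_filter cardE /enum_mem size_filter count_filter.
apply: eq_count => v /=. by rewrite andbT andbC.
Qed.

Fixpoint height (c : color) : nat :=
  match c with Star => 0 | Refine c _ => (height c).+1 end.

Lemma height_wl (W : finType) (R : rel W) t w : height (wl_color R t w) = t.
Proof. by elim: t => //= t ->. Qed.

Fixpoint depth (p : form) : nat :=
  match p with
  | FTop => 0
  | FNeg p => depth p
  | FAnd p q => maxn (depth p) (depth q)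
  | FDia _ p => (depth p).+1
  end.

Lemma Refine_inj a b a' b' : Refine a b = Refine a' b' -> a = a' /\ b = b'.
Proof. by case=> -> ->. Qed.

Lemma sat_inv p : forall t, depth p <= t ->
  forall (W : finType) (R : rel W) w (W' : finType) (R' : rel W') w',
  wl_color R t w = wl_color R' t w' -> sat R p w = sat R' p w'.
Proof.
elim: p => [|p IH|p IHp q IHq|k p IH] t /=.
- by [].
- by move=> Hd W R w W' R' w' E; rewrite (IH t Hd _ _ _ _ _ _ E).
- rewrite geq_max => /andP[Hp Hq] W R w W' R' w' E.
  by rewrite (IHp t Hp _ _ _ _ _ _ E) (IHq t Hq _ _ _ _ _ _ E).
- case: t => [//|t] Hd W R w W' R' w' /= /Refine_inj [_ E].
  have Hperm : perm_eq [seq wl_color R t v | v <- enum W & R w v]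
                       [seq wl_color R' t v | v <- enum W' & R' w' v].
    by rewrite -(perm_sort (fun a b => pickle a <= pickle b)) -/(mset_of _) E
       /mset_of perm_sort.
  set Q := fun x => [exists v, (wl_color R t v == x) && sat R p v].
  have HQ : forall v, Q (wl_color R t v) = sat R p v.
    move=> v; rewrite /Q; apply/existsP/idP.
      by case=> u /andP[/eqP Eu su]; rewrite -(IH t Hd _ _ _ _ _ _ Eu).
    by move=> sv; exists v; rewrite eqxx.
  rewrite !card_succ.
  have -> : count (sat R p) [seq v <- enum W | R w v]
          = count Q [seq wl_color R t v | v <- enum W & R w v].
    by rewrite count_map; apply: eq_count => v /=; rewrite HQ.
  rewrite (permP Hperm) count_map.
  congr (k <= _); apply: eq_in_count => v' Hv' /=.
  have : wl_color R' t v' \in [seq wl_color R t v | v <- enum W & R w v].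
    by rewrite (perm_mem Hperm); apply: map_f.
  case/mapP => v _ Ev.
  by rewrite Ev HQ (IH t Hd _ _ _ _ _ _ (esym Ev)).
Qed.

Definition FBot := FNeg FTop.
Definition FOr p q := FNeg (FAnd (FNeg p) (FNeg q)).
Definition bigOr l := foldr FOr FBot l.
Definition bigAnd l := foldr FAnd FTop l.
Definition exactly m p := FAnd (FDia m p) (FNeg (FDia m.+1 p)).

Fixpoint chi (t : nat) (c : color) : form :=
  match t, c with
  | 0, Star => FTop
  | 0, _ => FBot
  | _.+1, Star => FBot
  | t'.+1, Refine c' ms =>
      if ms == mset_of ms then
        FAnd (chi t' c')
          (FAnd (FNeg (FDia 1 (FNeg (bigOr (map (chi t') ms)))))
                (bigAnd (map (fun d => exactly (count_mem d ms) (chi t' d)) ms)))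
      else FBot
  end.

Lemma sat_bigOr (W : finType) (R : rel W) (f : color -> form) l w :
  sat R (bigOr (map f l)) w = has (fun d => sat R (f d) w) l.
Proof. by elim: l => //= d l <-; case: (sat R (f d) w); rewrite /= ?negbK. Qed.

Lemma sat_bigAnd (W : finType) (R : rel W) (f : color -> form) l w :
  sat R (bigAnd (map f l)) w = all (fun d => sat R (f d) w) l.
Proof. by elim: l => //= d l ->. Qed.

Definition leC := fun a b : color => pickle a <= pickle b.
Lemma leC_total : total leC.
Proof. by move=> a b; rewrite /leC leq_total. Qed.
Lemma leC_trans : transitive leC.
Proof. by move=> a b c; rewrite /leC; apply: leq_trans. Qed.
Lemma leC_anti : antisymmetric leC.
Proof.
move=> a b; rewrite /leC -eqn_leq => /eqP H.
by apply: (pcan_inj (@pickleK color)).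
Qed.

Lemma Refine_eq a b a' b' :
  (Refine a b == Refine a' b') = (a == a') && (b == b').
Proof.
apply/eqP/andP => [/Refine_inj [-> ->]|[/eqP -> /eqP ->]]; by split.
Qed.

Lemma chiP t : forall c (W : finType) (R : rel W) w,
  sat R (chi t c) w = (wl_color R t w == c).
Proof.
elim: t => [|t IH] [|c' ms] W R w /=.
- by rewrite eqxx.
- by apply/esym/eqP.
- by apply/esym/eqP.
set L := [seq wl_color R t v | v <- enum W & R w v].
case: eqP => Hms; last first.
  apply/esym/negP => /eqP /Refine_inj [_ E]; apply: Hms.
  by rewrite -E; symmetry; exact: (sorted_sort leC_trans (sort_sorted leC_total _)).
rewrite /= Refine_eq IH sat_bigAnd.
congr (_ && _).
have -> : (mset_of L == ms) = perm_eq L ms.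
  rewrite {1}Hms; apply/eqP/idP.
    by move/(perm_sortP leC_total leC_trans leC_anti).
  by move/(perm_sortP leC_total leC_trans leC_anti).
rewrite card_succ.
have -> : count (fun v => ~~ sat R (bigOr [seq chi t i | i <- ms]) v)
             [seq v <- enum W | R w v] = count (predC (mem ms)) L.
  rewrite count_map; apply: eq_count => v /=.
  rewrite sat_bigOr; congr (~~ _).
  apply/hasP/idP => [[d Hd]|Hv]; first by rewrite IH => /eqP ->.
  by exists (wl_color R t v) => //; rewrite IH.
have Hcnt : forall d, #|[pred v | R w v && sat R (chi t d) v]| = count_mem d L.
  by move=> d; rewrite card_succ count_map; apply: eq_count => v /=; rewrite IH.
have -> : all (fun d => sat R (exactly (count_mem d ms) (chi t d)) w) ms
        = all (fun d => count_mem d L == count_mem d ms) ms.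
  apply: eq_all => d /=; rewrite Hcnt.
  by rewrite -leqNgt eqn_leq andbC.
rewrite -has_count has_predC negbK.
apply/andP/idP => [[Ha Hc]|Hp]; last first.
  split.
    by apply/allP => x; rewrite (perm_mem Hp).
  by apply/allP => d _; rewrite (permP Hp).
rewrite /perm_eq; apply/allP => x _ /=; apply/eqP.
case Hx: (x \in ms).
  by move/allP: Hc => /(_ x Hx) /eqP.
have -> : count_mem x ms = 0 by apply/count_memPn; rewrite Hx.
apply/count_memPn/negP => HL.
by move/allP: Ha => /(_ x HL) H; move: Hx; have -> : x \in ms by exact: H.
Qed.

Theorem corollary3 (K : pclass) :
  definable_by_countable_disjunction K <-> WL_recognizable K.
Proof.
split.
- case=> S HS.
  exists (fun c => exists phi (W' : finType) (R' : rel W') (w' : W'),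
            [/\ S phi, sat R' phi w' & c = wl_color R' (depth phi) w']).
  move=> W R w; split.
    case/HS => phi [Sp sp].
    by exists (depth phi), phi, W, R, w.
  case=> t [phi [W' [R' [w' [Sp sp E]]]]].
  have Ht : t = depth phi by rewrite -(height_wl _ R t w) E height_wl.
  subst t.
  apply/HS; exists phi; split => //.
  by rewrite (@sat_inv phi _ (leqnn _) _ _ _ _ _ _ E).
- case=> F HF.
  exists (fun phi => exists c, F c /\ phi = chi (height c) c).
  move=> W R w; split.
    case/HF => t Ft.
    exists (chi t (wl_color R t w)); split.
      by exists (wl_color R t w); rewrite height_wl.
    by rewrite chiP.
  case=> phi [[c [Fc ->]] s].
  rewrite chiP in s.
  apply/HF; exists (height c).
  by move/eqP: s => ->.
Qed.
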